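(* Let $n\le -1$ be an odd integer with $3\mid n$. If $n\equiv 3\pmod 4$, then $w$ does not divide $q_n$ modulo $3$. If $n\equiv 1\pmod 4$, then $w^2$ divides $q_n$ modulo $3$ but $w^3$ does not.
   Context: Define $q_n\in\mathbb{Z}[w]$ for odd $n\le -1$ by $q_{-1}=w^3-w^2+2w-7$, $q_{-3}=w^5-2w^4-2w^3+5w^2+3w-9$, $q_{-5}=w^7-2w^6-4w^5+8w^4+4w^3-7w^2+2w-7$, and $q_n=(w^2-1)(q_{n+2}-q_{n+4})+q_{n+6}$ for odd $n<-5$. Divisibility ''modulo 3'' refers to the reductions in $\mathbb{F}_3[w]$. *)

(* Defs.v *)
From HB Require Import structures.
From mathcomp Require Import all_boot all_order all_algebra.
Set Implicit Arguments. Unset Strict Implicit. Unset Printing Implicit Defensive.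
Import Order.TTheory GRing.Theory Num.Theory.
Local Open Scope ring_scope.

Definition q_m1 : {poly int} := 'X^3 - 'X^2 + 2%:P * 'X - 7%:P.
Definition q_m3 : {poly int} :=
  'X^5 - 2%:P * 'X^4 - 2%:P * 'X^3 + 5%:P * 'X^2 + 3%:P * 'X - 9%:P.
Definition q_m5 : {poly int} :=
  'X^7 - 2%:P * 'X^6 - 4%:P * 'X^5 + 8%:P * 'X^4 + 4%:P * 'X^3
  - 7%:P * 'X^2 + 2%:P * 'X - 7%:P.

(* qtrip k = (Q k, Q (k+1), Q (k+2)) where Q k := q_{-(2k+1)}.
   The recursion q_n = (w^2-1)(q_{n+2} - q_{n+4}) + q_{n+6} reads
   Q (k+3) = (w^2-1)(Q (k+2) - Q (k+1)) + Q k. *)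
Fixpoint qtrip (k : nat) : {poly int} * {poly int} * {poly int} :=
  match k with
  | O => (q_m1, q_m3, q_m5)
  | S k' => let: (a, b, c) := qtrip k' in
            (b, c, ('X^2 - 1) * (c - b) + a)
  end.

Definition Qk (k : nat) : {poly int} := (qtrip k).1.1.

(* q_n for odd n <= -1: n = -(2k+1), i.e. k = (|n| - 1)/2 *)
Definition q (n : int) : {poly int} := Qk ((`|n|%N).-1)./2.

Definition q3 (n : int) : {poly 'F_3} :=
  map_poly (fun z : int => z%:~R : 'F_3) (q n).

(* Main.v *)
Require Import Defs.
From HB Require Import structures.
From mathcomp Require Import all_boot all_order all_algebra.
Import Order.TTheory GRing.Theory Num.Theory.
Local Open Scope ring_scope.

Definition T3 := ('F_3 * 'F_3 * 'F_3)%type.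
Definition low (p : {poly int}) : T3 := ((p`_0)%:~R, (p`_1)%:~R, (p`_2)%:~R).
Definition nw (a b c : T3) : T3 :=
  let '(a0,a1,a2) := a in let '(b0,b1,b2) := b in let '(c0,c1,c2) := c in
  (a0 - (c0 - b0), a1 - (c1 - b1), a2 + (c0 - b0) - (c2 - b2)).
Definition stp (s : T3 * T3 * T3) : T3 * T3 * T3 :=
  let '(a,b,c) := s in (b, c, nw a b c).
Definition L (t : {poly int} * {poly int} * {poly int}) := (low t.1.1, low t.1.2, low t.2).

Lemma lowstep a b c : low (('X^2 - 1) * (c - b) + a) = nw (low a) (low b) (low c).
Proof.
rewrite /low /nw mulrBl mul1r [_ * (c - b)]mulrC !(coefD, coefB, coefMXn) /=.
rewrite !(coefN, coefB, subnn) !(intrD, intrB, intrN) ?mulr0z !add0r.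
by congr (_,_,_); rewrite addrC ?addrA.
Qed.

Lemma L0 : L (qtrip 0) = ((2,2,2),(0,0,2),(2,2,2)).
Proof.
rewrite /L /= /low /q_m1 /q_m3 /q_m5.
rewrite !(coefD, coefB, coefN, coefCM, coefXn, coefX, coefC) /=.
by apply/eqP.
Qed.

Lemma Lstep k : L (qtrip k.+1) = stp (L (qtrip k)).
Proof. by rewrite /= ; case: (qtrip k) => [[a b] c]; rewrite /L /= lowstep. Qed.

Lemma Liter k : L (qtrip k) = iter k stp (L (qtrip 0)).
Proof. by elim: k => [|k IH] //=; rewrite Lstep IH. Qed.

Lemma per6 : iter 6 stp (L (qtrip 0)) = L (qtrip 0).
Proof. by rewrite L0; apply/eqP. Qed.

Lemma Lper t r : L (qtrip (6 * t + r)) = iter r stp (L (qtrip 0)).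
Proof.
rewrite Liter addnC iterD; congr iter.
by elim: t => [|t IH] //; rewrite mulnS iterD IH per6.
Qed.

Lemma Q1 t : low (Qk (6 * t + 1)) = (0,0,2).
Proof. by rewrite /Qk -[low _]/((L (qtrip (6 * t + 1))).1.1) Lper L0; apply/eqP. Qed.
Lemma Q4 t : low (Qk (6 * t + 4)) = (2,2,1).
Proof. by rewrite /Qk -[low _]/((L (qtrip (6 * t + 4))).1.1) Lper L0; apply/eqP. Qed.

Lemma dvdXn (j : nat) (p : {poly 'F_3}) : ('X^j %| p) = [forall i : 'I_j, p`_i == 0].
Proof.
apply/dvdpP/forallP.
  by move=> [r ->] i; rewrite coefMXn ltn_ord.
move=> H; exists (drop_poly j p); rewrite -{1}(poly_take_drop j p).
suff -> : take_poly j p = 0 by rewrite add0r.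
apply/polyP=> i; rewrite coef_take_poly coef0.
by case: ltnP => // hi; exact: (eqP (H (Ordinal hi))).
Qed.

Lemma dvdX1 (p : {poly 'F_3}) : ('X %| p) = (p`_0 == 0).
Proof.
rewrite -['X]expr1 dvdXn; apply/forallP/idP => [H|h [[|i] hi]] //.
exact: (H ord0).
Qed.

Lemma dvdX2 (p : {poly 'F_3}) : ('X^2 %| p) = (p`_0 == 0) && (p`_1 == 0).
Proof.
rewrite dvdXn; apply/forallP/andP => [H|[h0 h1] [[|[|i]] hi]] //.
by split; [exact: (H ord0) | exact: (H (Ordinal (isT : (1 < 2)%N)))].
Qed.

Lemma dvdX3 (p : {poly 'F_3}) : ('X^3 %| p) = [&& p`_0 == 0, p`_1 == 0 & p`_2 == 0].
Proof.
rewrite dvdXn; apply/forallP/and3P => [H|[h0 h1 h2] [[|[|[|i]]] hi]] //.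
by split; [exact: (H ord0) | exact: (H (Ordinal (isT : (1 < 3)%N)))|exact: (H (Ordinal (isT : (2 < 3)%N)))].
Qed.

Lemma q3coef n i : (q3 n)`_i = ((q n)`_i)%:~R.
Proof. by rewrite /q3 coef_map_id0. Qed.

Theorem proposition5p1 (n : int) :
  n <= -1 -> ~~ (2 %| n)%Z -> (3 %| n)%Z ->
  (((n %% 4)%Z = 3 -> ~~ ('X %| q3 n)) /\
   ((n %% 4)%Z = 1 -> ('X^2 %| q3 n) && ~~ ('X^3 %| q3 n))).
Proof.
move=> hle h2 h3.
set m := `|n|%N.
have hn : n = - (m%:Z).
  by rewrite /m abszE ler0_norm ?opprK // (le_trans hle).
rewrite !dvdzE -/m in h2 h3.
have hm := divn_eq m 12.
move: (m %/ 12)%N (m %% 12)%N (ltn_pmod m (isT : (0 < 12)%N)) hm => t r hr hm.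
have e4 : n = (- (t * 3)%N%:Z) * 4 + - (r%:Z).
  by rewrite hn hm PoszD PoszM PoszM opprD mulNr -mulrA.
have hq : q n = Qk (m.-1./2)%N by [].
rewrite dvdX1 dvdX2 dvdX3 !q3coef hq e4 modzMDl hm.
rewrite hm dvdn_addr ?(dvdn_mull _ (isT : (2 %| 12)%N)) in h2.
rewrite hm dvdn_addr ?(dvdn_mull _ (isT : (3 %| 12)%N)) in h3.
2,3: by [].
clear e4 hq hn hle hm.
do 12?[case: r hr h2 h3 => [|r] hr h2 h3; try by []].
  have e : (t * 12 + 2 = (6 * t + 1).*2)%N by rewrite -muln2 mulnDl mulnAC mulnC.
  rewrite addnS /= e doubleK.
  have := Q1 t; rewrite /low => [[-> -> ->]].
  by split=> [/eqP //|_].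
have e : (t * 12 + 8 = (6 * t + 4).*2)%N by rewrite -muln2 mulnDl mulnAC mulnC.
rewrite addnS /= e doubleK.
have := Q4 t; rewrite /low => [[-> -> ->]].
by split=> [_|/eqP //].
Qed.
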